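(* Let $k\ge 2$. If $G\in\mathcal{G}_k$ then $\kappa(G)\le\kappa(K_k)$. Moreover this bound is tight, since $K_k\in\mathcal{G}_k$.
   Context: For a graph $G=([n],E)$ and $w\in\mathbb{R}^E$, let $\mathrm{ip}(G,w)=\max_{x\in\{\pm1\}^n}\sum_{ij\in E}w_{ij}x_ix_j$ and $\mathrm{sdp}(G,w)=\max\sum_{ij\in E}w_{ij}u_i^Tu_j$, the maximum over unit vectors $u_1,\dots,u_n\in\mathbb{R}^n$; $\kappa(G)=\sup_{w\in\mathbb{R}^E}\mathrm{sdp}(G,w)/\mathrm{ip}(G,w)$. Let $E_n$ be the edge set of $K_n$ and $\mathrm{CUT}_n=\mathrm{conv}\{(x_ix_j)_{ij\in E_n}: x\in\{\pm1\}^n\}$. The support graph of a linear inequality $w^Tx\le\alpha$ on $\mathbb{R}^{E_n}$ is $H=(W,F)$ with $F=\{ij: w_{ij}\ne0\}$ and $W$ the set of nodes covered by $F$; it is supported by at most $k$ points if $|W|\le k$. $\mathcal{R}_k(K_n)$ is the polyhedron defined by all inequalities valid for $\mathrm{CUT}_n$ supported by at most $k$ points. For $G=([n],E)$, $\mathrm{CUT}(G)=\pi_E(\mathrm{CUT}_n)$, $\mathcal{R}_k(G)=\pi_E(\mathcal{R}_k(K_n))$ ($\pi_E$ the coordinate projection to $\mathbb{R}^E$), and $\mathcal{G}_k$ is the class of graphs $G$ with $\mathrm{CUT}(G)=\mathcal{R}_k(G)$. *)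

(* Defs.v *)
From HB Require Import structures.
From mathcomp Require Import all_boot all_order all_algebra.
From mathcomp Require Import classical_sets boolp reals constructive_ereal ereal.
Set Implicit Arguments. Unset Strict Implicit. Unset Printing Implicit Defensive.
Import Order.TTheory GRing.Theory Num.Theory.
Local Open Scope ring_scope.
Local Open Scope classical_set_scope.

Section Defs.
Variable R : realType.

(* Edge set E_n of K_n on vertex set [n] = 'I_n: pairs (i,j) with i < j. *)
Definition Kedges (n : nat) : {set 'I_n * 'I_n} := [set p : 'I_n * 'I_n | (p.1 < p.2)%N].

Definition sgn (b : bool) : R := if b then 1 else -1.

Definition cutvec (n : nat) (x : 'I_n -> bool) (p : 'I_n * 'I_n) : R :=
  sgn (x p.1) * sgn (x p.2).

Definition ip (n : nat) (E : {set 'I_n * 'I_n}) (w : 'I_n * 'I_n -> R) : R :=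
  sup [set r | exists x : 'I_n -> bool, r = \sum_(p in E) w p * cutvec x p].

Definition sdp (n : nat) (E : {set 'I_n * 'I_n}) (w : 'I_n * 'I_n -> R) : R :=
  sup [set r | exists u : 'I_n -> 'I_n -> R,
         (forall i, \sum_(l < n) u i l ^+ 2 = 1) /\
         r = \sum_(p in E) w p * (\sum_(l < n) u p.1 l * u p.2 l)].

(* kappa(G) = sup_w sdp(G,w)/ip(G,w), over the w for which the ratio is
   defined (ip(G,w) > 0), as an extended real. *)
Definition kappa (n : nat) (E : {set 'I_n * 'I_n}) : \bar R :=
  ereal_sup [set ((sdp E w / ip E w)%:E) | w in [set w | 0 < ip E w]].

(* Points of R^{E_n} are functions 'I_n * 'I_n -> R (only coordinates in
   Kedges n matter).  CUT_n = convex hull of the cut vectors. *)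
Definition inCUT (n : nat) (y : 'I_n * 'I_n -> R) : Prop :=
  exists lam : {ffun 'I_n -> bool} -> R,
    (forall x, 0 <= lam x) /\ \sum_x lam x = 1 /\
    forall p, p \in Kedges n -> y p = \sum_x lam x * cutvec x p.

Definition valid (n : nat) (a : 'I_n * 'I_n -> R) (alpha : R) : Prop :=
  forall y, inCUT y -> \sum_(p in Kedges n) a p * y p <= alpha.

Definition support (n : nat) (a : 'I_n * 'I_n -> R) : {set 'I_n} :=
  [set i | [exists p in Kedges n, (a p != 0) && ((p.1 == i) || (p.2 == i))]].

Definition inRk (n k : nat) (y : 'I_n * 'I_n -> R) : Prop :=
  forall (a : 'I_n * 'I_n -> R) (alpha : R),
    valid a alpha -> (#|support a| <= k)%N ->
    \sum_(p in Kedges n) a p * y p <= alpha.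

Definition inProj (n : nat) (E : {set 'I_n * 'I_n})
    (S : ('I_n * 'I_n -> R) -> Prop) (z : 'I_n * 'I_n -> R) : Prop :=
  exists y, S y /\ forall p, p \in E -> z p = y p.

Definition inGk (n k : nat) (E : {set 'I_n * 'I_n}) : Prop :=
  forall z, inProj E (@inCUT n) z <-> inProj E (@inRk n k) z.

End Defs.

(* Main.v *)
Require Import Defs.
From HB Require Import structures.
From mathcomp Require Import all_boot all_order all_algebra.
From mathcomp Require Import classical_sets boolp reals constructive_ereal ereal.
From mathcomp Require Import topology normedtype derive matrix_normedtype.
From mathcomp Require Import ring lra.
Import Order.TTheory GRing.Theory Num.Theory numFieldNormedType.Exports.
Local Open Scope ring_scope.
Set Implicit Arguments. Unset Strict Implicit. Unset Printing Implicit Defensive.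
Section A.
Variable R : realType.
Implicit Types n : nat.

Definition dot N (a b : 'I_N -> R) : R := \sum_(l < N) a l * b l.

Lemma sgn_sq b : sgn R b * sgn R b = 1.
Proof. by case: b; rewrite /sgn ?mulrNN mulr1. Qed.

Lemma norm_sgn b : `|sgn R b| = 1.
Proof. by case: b; rewrite /sgn ?normrN normr1. Qed.

Lemma norm_cutvec n (x : 'I_n -> bool) p : `|cutvec R x p| = 1.
Proof. by rewrite /cutvec normrM !norm_sgn mulr1. Qed.

Lemma ip_hassup n (E : {set 'I_n * 'I_n}) (w : 'I_n * 'I_n -> R) :
  has_sup [set r | exists x : 'I_n -> bool, r = \sum_(p in E) w p * cutvec R x p].
Proof.
split; first by exists (\sum_(p in E) w p * cutvec R (fun=> true) p); exists (fun=> true).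
exists (\sum_(p in E) `|w p|) => r [x ->].
apply: le_trans (ler_norm _) _; apply: le_trans (ler_norm_sum _ _ _) _; apply: ler_sum => p _.
by rewrite normrM norm_cutvec mulr1.
Qed.

Lemma ip_ub n (E : {set 'I_n * 'I_n}) (w : 'I_n * 'I_n -> R) (x : 'I_n -> bool) :
  \sum_(p in E) w p * cutvec R x p <= ip E w.
Proof. by apply: sup_upper_bound; [exact: ip_hassup| exists x]. Qed.

Lemma ip_le n (E : {set 'I_n * 'I_n}) (w : 'I_n * 'I_n -> R) t :
  (forall x : 'I_n -> bool, \sum_(p in E) w p * cutvec R x p <= t) -> ip E w <= t.
Proof.
move=> H; apply: ge_sup; first by exists (\sum_(p in E) w p * cutvec R (fun=> true) p); exists (fun=> true).
by move=> r [x ->]; exact: H.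
Qed.

Definition unitv n (u : 'I_n -> 'I_n -> R) := forall i, \sum_(l < n) u i l ^+ 2 = 1.

Lemma dot_unit_le N (a b : 'I_N -> R) :
  \sum_(l < N) a l ^+ 2 = 1 -> \sum_(l < N) b l ^+ 2 = 1 -> `|\sum_(l < N) a l * b l| <= 1.
Proof.
move=> ha hb; apply: le_trans (ler_norm_sum _ _ _) _.
have -> : (1 : R) = (\sum_(l < N) (a l ^+ 2 + b l ^+ 2)) / 2.
  by rewrite big_split /= ha hb; field.
rewrite ler_pdivlMr // mulr_suml; apply: ler_sum => l _.
rewrite normrM.
have h1 : a l ^+ 2 = `|a l| ^+ 2 by rewrite real_normK // num_real.
have h2 : b l ^+ 2 = `|b l| ^+ 2 by rewrite real_normK // num_real.
rewrite h1 h2; set x := `|a l|; set y := `|b l|.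
have : 0 <= (x - y) ^+ 2 by rewrite sqr_ge0.
lra.
Qed.

Lemma sdp_hassup n (E : {set 'I_n * 'I_n}) (w : 'I_n * 'I_n -> R) :
  has_sup [set r | exists u : 'I_n -> 'I_n -> R,
         (forall i, \sum_(l < n) u i l ^+ 2 = 1) /\
         r = \sum_(p in E) w p * (\sum_(l < n) u p.1 l * u p.2 l)].
Proof.
split.
  pose u (i l : 'I_n) : R := (l == i)%:R.
  have hu : forall i, \sum_(l < n) u i l ^+ 2 = 1.
    move=> i; rewrite (bigD1 i) //= big1 /u ?eqxx ?expr1n ?addr0 // => l /negbTE ->.
    by rewrite expr0n.
  by eexists; exists u; split; [exact: hu| reflexivity].
exists (\sum_(p in E) `|w p|) => r [u [hu ->]].
apply: le_trans (ler_norm _) _; apply: le_trans (ler_norm_sum _ _ _) _; apply: ler_sum => p _.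
rewrite normrM; apply: ler_piMr => //; exact: dot_unit_le.
Qed.

Lemma sdp_ub n (E : {set 'I_n * 'I_n}) (w : 'I_n * 'I_n -> R) (u : 'I_n -> 'I_n -> R) :
  (forall i, \sum_(l < n) u i l ^+ 2 = 1) ->
  \sum_(p in E) w p * (\sum_(l < n) u p.1 l * u p.2 l) <= sdp E w.
Proof. by move=> hu; apply: sup_upper_bound; [exact: sdp_hassup| exists u]. Qed.

Lemma sdp_le n (E : {set 'I_n * 'I_n}) (w : 'I_n * 'I_n -> R) t :
  (forall u : 'I_n -> 'I_n -> R, (forall i, \sum_(l < n) u i l ^+ 2 = 1) ->
     \sum_(p in E) w p * (\sum_(l < n) u p.1 l * u p.2 l) <= t) -> sdp E w <= t.
Proof.
move=> H; apply: ge_sup; first by case: (sdp_hassup E w).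
by move=> r [u [hu ->]]; exact: H.
Qed.

Lemma ip_le_sdp n (E : {set 'I_n * 'I_n}) (w : 'I_n * 'I_n -> R) : ip E w <= sdp E w.
Proof.
apply: ip_le => x.
case: n E w x => [|n] E w x.
  have hu0 : forall i : 'I_0, \sum_(l < 0) (fun _ _ => 0 : R) i l ^+ 2 = 1 by case.
  apply: le_trans _ (sdp_ub (u := fun _ _ => 0) E w hu0).
  by rewrite !big1 // => -[[]].
pose u (i l : 'I_n.+1) : R := sgn R (x i) * (l == ord0)%:R.
have hu : forall i, \sum_(l < n.+1) u i l ^+ 2 = 1.
  move=> i; rewrite big_ord_recl big1 /u ?eqxx ?mulr1 ?addr0.
    by rewrite expr2 sgn_sq.
  by move=> l _; rewrite mulr0 expr0n.
apply: le_trans _ (sdp_ub E w hu); rewrite le_eqVlt; apply/orP; left; apply/eqP.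
apply: eq_bigr => p _; congr (_ * _).
by rewrite big_ord_recl big1 /u ?addr0 ?mulr1 // => l _; rewrite !mulr0.
Qed.
End A.
Section B.
Variable R : realType.

Lemma sgn_neg b : sgn R (~~ b) = - sgn R b.
Proof. by case: b; rewrite /sgn ?opprK. Qed.

Lemma mean_zero n (i j : 'I_n) : i != j ->
  \sum_(x : {ffun 'I_n -> bool}) sgn R (x i) * sgn R (x j) = 0.
Proof.
move=> ij.
pose phi (x : {ffun 'I_n -> bool}) : {ffun 'I_n -> bool} :=
  [ffun l => if l == i then ~~ x l else x l].
have phiK : involutive phi.
  by move=> x; apply/ffunP => l; rewrite !ffunE; case: (l == i) => //; rewrite negbK.
have := @reindex_inj _ (@GRing.add R) 0 _ phi xpredT
   (fun x : {ffun 'I_n -> bool} => sgn R (x i) * sgn R (x j)) (inv_inj phiK).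
rewrite /= [X in _ = X](eq_bigr (fun x : {ffun 'I_n -> bool} => - (sgn R (x i) * sgn R (x j)))).
  rewrite sumrN => /eqP; rewrite -subr_eq0 opprK -mulr2n mulrn_eq0 /= => /eqP //.
move=> x _; rewrite /phi !ffunE eqxx.
have -> : (j == i) = false by apply/negbTE; rewrite eq_sym.
by rewrite sgn_neg mulNr.
Qed.

Lemma Kedges_neq n (p : 'I_n * 'I_n) : p \in Kedges n -> p.1 != p.2.
Proof. by rewrite inE => h; rewrite neq_ltn h. Qed.

Lemma exists_cut_ge0 n (a : 'I_n * 'I_n -> R) :
  exists x : 'I_n -> bool, 0 <= \sum_(p in Kedges n) a p * cutvec R x p.
Proof.
have S0 : \sum_(x : {ffun 'I_n -> bool}) \sum_(p in Kedges n) a p * cutvec R x p = 0.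
  rewrite exchange_big /= big1 // => p pK.
  by rewrite -mulr_sumr /cutvec mean_zero ?mulr0 // Kedges_neq.
have [[x hx]|H] := pselect (exists x : {ffun 'I_n -> bool}, 0 <= \sum_(p in Kedges n) a p * cutvec R x p).
  by exists x.
exfalso.
have H' : forall x : {ffun 'I_n -> bool}, 0 <= - \sum_(p in Kedges n) a p * cutvec R x p.
  by move=> x; rewrite oppr_ge0; case: (lerP (\sum_(p in Kedges n) a p * cutvec R x p) 0) => // /ltW h; exfalso; apply: H; exists x.
have : \sum_(x : {ffun 'I_n -> bool}) - \sum_(p in Kedges n) a p * cutvec R x p == 0.
  by rewrite sumrN S0 oppr0.
rewrite psumr_eq0; last by move=> x _; exact: H'.
move=> /allP /(_ [ffun=> false]) /=; rewrite mem_index_enum => /(_ isT).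
rewrite oppr_eq0 => /eqP h; apply: H; exists [ffun=> false]; by rewrite h.
Qed.
End B.
Section C.
Variable R : realType.

Lemma Kedges_card_gt0 k : (2 <= k)%N -> (0 < #|Kedges k|)%N.
Proof.
move=> hk; apply/card_gt0P.
have h0 : (0 < k)%N by apply: leq_trans hk.
have h1 : (1 < k)%N by apply: leq_trans hk.
by exists (Ordinal h0, Ordinal h1); rewrite inE.
Qed.

Lemma cutvec_sq n (x : 'I_n -> bool) p : cutvec R x p * cutvec R x p = 1.
Proof. by rewrite /cutvec mulrACA !sgn_sq mulr1. Qed.

Lemma KK k (hk : (2 <= k)%N) (c : R) (c0 : 0 <= c)
  (H : forall a : 'I_k * 'I_k -> R, 0 < ip (Kedges k) a ->
         sdp (Kedges k) a <= c * ip (Kedges k) a)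
  (a : 'I_k * 'I_k -> R) (t : R)
  (ht : forall x : 'I_k -> bool, \sum_(p in Kedges k) a p * cutvec R x p <= t)
  (u : 'I_k -> 'I_k -> R) (hu : forall i, \sum_(l < k) u i l ^+ 2 = 1) :
  \sum_(p in Kedges k) a p * (\sum_(l < k) u p.1 l * u p.2 l) <= c * t.
Proof.
have [x0 hx0] := exists_cut_ge0 a.
pose m : R := \sum_(p in Kedges k) 1.
have m0 : 0 < m.
  by rewrite /m sumr_const ltr0n Kedges_card_gt0.
pose D p := \sum_(l < k) u p.1 l * u p.2 l.
have hD p : `|D p| <= 1 by apply: dot_unit_le.
apply/ler_addgt0Pr => e e0.
pose eps := e / (c * m + m + 1).
have den0 : 0 < c * m + m + 1.
  have : 0 <= c * m by rewrite mulr_ge0 // ltW.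
  lra.
have eps0 : 0 < eps by rewrite /eps divr_gt0.
pose ae p := a p + eps * cutvec R x0 p.
have cut_ae x : \sum_(p in Kedges k) ae p * cutvec R x p =
   \sum_(p in Kedges k) a p * cutvec R x p + eps * \sum_(p in Kedges k) cutvec R x0 p * cutvec R x p.
  rewrite mulr_sumr -big_split /=; apply: eq_bigr => p _.
  by rewrite /ae; ring.
have ipp : 0 < ip (Kedges k) ae.
  apply: lt_le_trans (ip_ub (Kedges k) ae x0); rewrite cut_ae.
  have -> : \sum_(p in Kedges k) cutvec R x0 p * cutvec R x0 p = m.
    by apply: eq_bigr => p _; rewrite cutvec_sq.
  have : 0 < eps * m by rewrite mulr_gt0.
  lra.
have ipl : ip (Kedges k) ae <= t + eps * m.
  apply: ip_le => x; rewrite cut_ae; apply: lerD; first exact: ht.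
  rewrite ler_pM2l //; apply: ler_sum => p _.
  by apply: le_trans (ler_norm _) _; rewrite normrM !norm_cutvec mulr1.
have gl : \sum_(p in Kedges k) a p * D p - eps * m <= \sum_(p in Kedges k) ae p * D p.
  have -> : \sum_(p in Kedges k) ae p * D p =
      \sum_(p in Kedges k) a p * D p + eps * \sum_(p in Kedges k) cutvec R x0 p * D p.
    rewrite mulr_sumr -big_split /=; apply: eq_bigr => p _.
    by rewrite /ae; ring.
  rewrite lerD2l -mulrN ler_pM2l // -sumrN; apply: ler_sum => p _.
  have : `|cutvec R x0 p * D p| <= 1 by rewrite normrM norm_cutvec mul1r.
  by rewrite ler_norml => /andP[].
have sl := sdp_ub (Kedges k) ae hu.
have h3 := H ae ipp.
have h4 : c * ip (Kedges k) ae <= c * t + c * (eps * m).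
  by rewrite -mulrDr ler_wpM2l.
have h5 : c * (eps * m) + eps * m <= e.
  have -> : c * (eps * m) + eps * m = eps * (c * m + m) by ring.
  rewrite /eps mulrAC ler_pdivrMr // ler_wpM2l ?ltW //; lra.
rewrite -/D in sl *.
lra.
Qed.
End C.
Section D.
Variable R : realType.

Lemma dotC N (x y : 'I_N -> R) : dot x y = dot y x.
Proof. by apply: eq_bigr => l _; rewrite mulrC. Qed.

Lemma dot_ext N (x x' y : 'I_N -> R) : (forall l, x l = x' l) -> dot x y = dot x' y.
Proof. by move=> h; apply: eq_bigr => l _; rewrite h. Qed.

Lemma dotB N (x x' y : 'I_N -> R) : dot (fun l => x l - x' l) y = dot x y - dot x' y.
Proof. by rewrite /dot -sumrB; apply: eq_bigr => l _; rewrite mulrBl. Qed.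

Lemma dotZ N (c : R) (x y : 'I_N -> R) : dot (fun l => x l * c) y = dot x y * c.
Proof. by rewrite /dot mulr_suml; apply: eq_bigr => l _; ring. Qed.

Lemma dot_sum N m (f : 'I_m -> R) (B : 'I_m -> 'I_N -> R) (y : 'I_N -> R) :
  dot (fun l => \sum_(a < m) f a * B a l) y = \sum_(a < m) f a * dot (B a) y.
Proof.
rewrite /dot; under eq_bigr do rewrite mulr_suml.
rewrite exchange_big /=; apply: eq_bigr => a _; rewrite mulr_sumr.
by apply: eq_bigr => l _; ring.
Qed.

Lemma sum_delta m (f : 'I_m -> R) (b : 'I_m) : \sum_(a < m) f a * (a == b)%:R = f b.
Proof.
rewrite (bigD1 b) //= eqxx mulr1 big1 ?addr0 // => a /negbTE ->; by rewrite mulr0.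
Qed.

Definition ext N m (B : 'I_m -> 'I_N -> R) (e : 'I_N -> R) (a : 'I_m.+1) : 'I_N -> R :=
  if unlift ord_max a is Some a' then B a' else e.

Lemma ext_lift N m (B : 'I_m -> 'I_N -> R) e a : ext B e (lift ord_max a) = B a.
Proof. by rewrite /ext liftK. Qed.

Lemma ext_max N m (B : 'I_m -> 'I_N -> R) e : ext B e ord_max = e.
Proof. by rewrite /ext unlift_none. Qed.

Lemma sum_ext m (F : 'I_m.+1 -> R) :
  \sum_(a < m.+1) F a = \sum_(a < m) F (lift ord_max a) + F ord_max.
Proof.
rewrite big_ord_recr /=; congr (_ + _); apply: eq_bigr => a _; congr F.
apply: val_inj => /=; by rewrite /bump leqNgt ltn_ord.
Qed.

Lemma OB N n (u : 'I_n -> 'I_N -> R) (s : seq 'I_n) :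
  exists m (B : 'I_m -> 'I_N -> R), (m <= size s)%N /\
    (forall a b, dot (B a) (B b) = (a == b)%:R) /\
    forall i, i \in s -> forall l, u i l = \sum_(a < m) dot (u i) (B a) * B a l.
Proof.
elim: s => [|i0 s [m [B [hm [hON hrep]]]]].
  by exists 0%N, (fun _ _ => 0); split => //; split => // -[].
pose v := u i0.
pose c a := dot v (B a).
pose r l := v l - \sum_(a < m) c a * B a l.
have F1 b : dot r (B b) = 0.
  rewrite /r dotB dot_sum.
  under eq_bigr do rewrite hON.
  by rewrite sum_delta subrr.
case: (boolP [forall l, r l == 0]) => [/forallP r0 | /forallPn [l0 rl0]].
  exists m, B; split; first by apply: leq_trans hm _.
  split => // i; rewrite in_cons => /orP[/eqP -> | /hrep //] l.
  by move: (r0 l); rewrite /r subr_eq0 => /eqP.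
pose rho := dot r r.
have rho0 : 0 < rho.
  rewrite lt_def; apply/andP; split; last by apply: sumr_ge0 => l _; by rewrite -expr2 sqr_ge0.
  apply/negP => /eqP h; apply: (negP rl0).
  have : \sum_(l < N) r l * r l == 0 by rewrite -/(dot r r) -/rho h.
  rewrite psumr_eq0; last by move=> l _; rewrite -expr2 sqr_ge0.
  by move=> /allP /(_ l0 (mem_index_enum _)) /=; rewrite mulf_eq0 orbb.
pose nr := Num.sqrt rho.
have nr0 : 0 < nr by rewrite sqrtr_gt0.
have nr2 : nr * nr = rho by rewrite -expr2 sqr_sqrtr // ltW.
pose e l := r l / nr.
have Fe b : dot e (B b) = 0 by rewrite /e dotZ F1 mul0r.
have Fee : dot e e = 1.
  rewrite /e dotZ dotC dotZ -mulrA -invfM nr2 /rho mulfV //.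
  by rewrite gt_eqF.
have Frv : dot v r = rho.
  have -> : dot v r = dot (fun l => r l + \sum_(a < m) c a * B a l) r.
    by apply: dot_ext => l; rewrite /r subrK.
  rewrite /dot; under eq_bigr do rewrite mulrDl; rewrite big_split /= -/(dot r r) -/rho.
  have -> : \sum_(i < N) (\sum_(a < m) c a * B a i) * r i = 0.
    rewrite -/(dot _ r) dot_sum big1 // => a _; by rewrite dotC F1 mulr0.
  by rewrite addr0.
have Fve : dot v e = nr.
  rewrite dotC /e dotZ dotC Frv -nr2 mulfK //; by rewrite gt_eqF.
exists m.+1, (ext B e); split => //; split.
  move=> a b.
  case: (unliftP ord_max a) => [a'|] ->; case: (unliftP ord_max b) => [b'|] ->;
    rewrite ?ext_lift ?ext_max.
  - by rewrite hON (inj_eq (@lift_inj _ ord_max)).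
  - by rewrite dotC Fe eq_sym (negbTE (neq_lift _ _)).
  - by rewrite Fe (negbTE (neq_lift _ _)).
  - by rewrite Fee eqxx.
move=> i; rewrite in_cons => /orP[/eqP -> | hi] l.
  rewrite sum_ext ext_max.
  under eq_bigr do rewrite ext_lift.
  rewrite -/v Fve /e -/(c _).
  have : r l = v l - \sum_(a < m) c a * B a l by [].
  rewrite [nr * _]mulrC divfK ?gt_eqF //.
  by move=> ->; rewrite /c addrC subrK.
rewrite sum_ext ext_max.
under eq_bigr do rewrite ext_lift.
have -> : dot (u i) e = 0.
  rewrite (dot_ext (x' := fun l => \sum_(a < m) dot (u i) (B a) * B a l)); last exact: hrep.
  rewrite dot_sum big1 // => a _; by rewrite (dotC (B a)) Fe mulr0.
by rewrite mul0r addr0; exact: hrep.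
Qed.

Lemma GS N K n (S : {set 'I_n}) (u : 'I_n -> 'I_N -> R) : (#|S| <= K)%N ->
  exists w : 'I_n -> 'I_K -> R, forall i j, i \in S -> j \in S ->
    dot (w i) (w j) = dot (u i) (u j).
Proof.
move=> hS.
have [m [B [hm [hON hrep]]]] := OB u (enum S).
have mK : (m <= K)%N by apply: leq_trans hm _; rewrite -cardE.
pose f i (l : nat) : R := oapp (fun a : 'I_m => dot (u i) (B a)) 0 (insub l).
exists (fun i (l : 'I_K) => f i l) => i j hi hj.
have -> : dot (u i) (u j) = \sum_(a < m) dot (u i) (B a) * dot (u j) (B a).
  rewrite (dot_ext (x' := fun l => \sum_(a < m) dot (u i) (B a) * B a l)); last first.
    by apply: hrep; rewrite mem_enum.
  by rewrite dot_sum; apply: eq_bigr => a _; rewrite (dotC (B a)).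
have -> : \sum_(a < m) dot (u i) (B a) * dot (u j) (B a) = \sum_(a < m) f i a * f j a.
  by apply: eq_bigr => a _; rewrite /f valK.
rewrite (big_ord_widen _ (fun a => f i a * f j a) mK) big_mkcond /=.
apply: eq_bigr => l _; case: ifP => // /negbT hl.
by rewrite /f insubF ?mul0r //; apply/negbTE.
Qed.
End D.
Section E.
Variable R : realType.

Lemma valid_cut n (a : 'I_n * 'I_n -> R) alpha : valid a alpha ->
  forall x : 'I_n -> bool, \sum_(p in Kedges n) a p * cutvec R x p <= alpha.
Proof.
move=> hv x; apply: hv.
pose x0 : {ffun 'I_n -> bool} := [ffun i => x i].
exists (fun z => (z == x0)%:R); split; first by move=> z; rewrite ler0n.
split.
  by rewrite (bigD1 x0) //= eqxx big1 ?addr0 // => z /negbTE ->.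
move=> p _; rewrite (bigD1 x0) //= eqxx mul1r big1 ?addr0.
  by rewrite /cutvec /x0 !ffunE.
by move=> z /negbTE ->; rewrite mul0r.
Qed.

Lemma sum_if_eq (T : finType) (A : {set T}) (x : T) (g : T -> R) :
  \sum_(q in A) (if x == q then g q else 0) = if x \in A then g x else 0.
Proof.
rewrite -big_mkcondr /=; case: ifP => hx.
  by apply: (big_pred1 x) => q /=; rewrite eq_sym; case: eqP => [->|]; rewrite ?hx ?andbF ?andbT.
by rewrite big_pred0 // => q; case: eqP => [<-|]; rewrite ?hx ?andbF.
Qed.

Lemma push_sum n k (sig : 'I_n -> 'I_k) (a : 'I_n * 'I_n -> R)
  (hs : forall p, p \in Kedges n -> a p != 0 -> (sig p.1, sig p.2) \in Kedges k)
  (F : 'I_k * 'I_k -> R) :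
  \sum_(q in Kedges k) (\sum_(p in Kedges n | (sig p.1, sig p.2) == q) a p) * F q =
  \sum_(p in Kedges n) a p * F (sig p.1, sig p.2).
Proof.
under eq_bigr do rewrite big_mkcondr mulr_suml.
rewrite exchange_big /=; apply: eq_bigr => p hp.
have -> : \sum_(q in Kedges k) (if (sig p.1, sig p.2) == q then a p else 0) * F q =
   \sum_(q in Kedges k) (if (sig p.1, sig p.2) == q then a p * F (sig p.1, sig p.2) else 0).
  by apply: eq_bigr => q _; case: eqP => [<-|]; rewrite ?mul0r.
rewrite sum_if_eq; case: ifP => // hq.
case: (eqVneq (a p) 0) => [->|hne]; first by rewrite mul0r.
by rewrite hs in hq.
Qed.

Lemma transfer k (hk : (2 <= k)%N) (c : R) (c0 : 0 <= c)
  (H : forall a : 'I_k * 'I_k -> R, 0 < ip (Kedges k) a ->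
         sdp (Kedges k) a <= c * ip (Kedges k) a)
  n (a : 'I_n * 'I_n -> R) alpha (hv : valid a alpha)
  (hS : (#|Defs.support a| <= k)%N)
  (u : 'I_n -> 'I_n -> R) (hu : forall i, \sum_(l < n) u i l ^+ 2 = 1) :
  \sum_(p in Kedges n) a p * (\sum_(l < n) u p.1 l * u p.2 l) <= c * alpha.
Proof.
set S := Defs.support a in hS.
have inS p : p \in Kedges n -> a p != 0 -> (p.1 \in S) && (p.2 \in S).
  move=> hp ha; rewrite !inE; apply/andP; split; apply/existsP; exists p;
    by rewrite hp ha eqxx ?orbT.
clearbody S.
case: k hk H hS => // k hk H hS.
pose rk (i : 'I_n) := #|[set s in S | (s < i)%N]|.
have rk_lt i : i \in S -> (rk i < #|S|)%N.
  move=> hi; apply: proper_card; apply/properP; split.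
    by apply/fintype.subsetP => s; rewrite inE => /andP[].
  by exists i => //; rewrite inE ltnn andbF.
have rk_mono (i j : 'I_n) : i \in S -> (i < j)%N -> (rk i < rk j)%N.
  move=> hi hij; apply: proper_card; apply/properP; split.
    apply/fintype.subsetP => s; rewrite !inE => /andP[-> /= hs]; exact: ltn_trans hs hij.
  by exists i; rewrite !inE hi ?hij // ltnn.
pose sig (i : 'I_n) : 'I_k.+1 := inord (rk i).
have sigE i : i \in S -> nat_of_ord (sig i) = rk i.
  by move=> hi; rewrite /sig inordK // (leq_trans (rk_lt i hi)).
have sig_inj i j : i \in S -> j \in S -> sig i = sig j -> i = j.
  move=> hi hj /(congr1 (@nat_of_ord _)); rewrite !sigE // => e.
  case: (ltngtP i j) => [hij|hij|/val_inj //].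
    by have := rk_mono _ _ hi hij; rewrite e ltnn.
  by have := rk_mono _ _ hj hij; rewrite e ltnn.
have hs p : p \in Kedges n -> a p != 0 -> (sig p.1, sig p.2) \in Kedges k.+1.
  move=> hp ha; have /andP[h1 h2] := inS p hp ha.
  by rewrite inE /= !sigE // rk_mono //; move: hp; rewrite inE.
have [w hw] := GS u hS.
pose e0 (l : 'I_k.+1) : R := (l == ord0)%:R.
pose v (q : 'I_k.+1) : 'I_k.+1 -> R :=
  if [pick i in S | sig i == q] is Some i then w i else e0.
have vsig i : i \in S -> v (sig i) = w i.
  move=> hi; rewrite /v; case: pickP => [i' /andP[hi' /eqP e]|/(_ i)].
    by rewrite (sig_inj _ _ hi' hi e).
  by rewrite hi eqxx.
have hv' : forall q, \sum_(l < k.+1) v q l ^+ 2 = 1.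
  move=> q; rewrite /v; case: pickP => [i /andP[hi _]|_].
    have := hw i i hi hi; rewrite /dot => ->.
    by rewrite -(hu i); apply: eq_bigr => l _; rewrite expr2.
  rewrite (bigD1 ord0) //= /e0 eqxx expr1n big1 ?addr0 // => l /negbTE ->.
  by rewrite expr0n.
pose a' q := \sum_(p in Kedges n | (sig p.1, sig p.2) == q) a p.
have -> : \sum_(p in Kedges n) a p * (\sum_(l < n) u p.1 l * u p.2 l) =
   \sum_(q in Kedges k.+1) a' q * (\sum_(l < k.+1) v q.1 l * v q.2 l).
  rewrite (push_sum hs (fun q => \sum_(l < k.+1) v q.1 l * v q.2 l)).
  apply: eq_bigr => p hp; case: (eqVneq (a p) 0) => [->|ha]; first by rewrite !mul0r.
  have /andP[h1 h2] := inS p hp ha.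
  by rewrite /= !vsig //; have := hw _ _ h1 h2; rewrite /dot => ->.
apply: (KK hk c0 H) => // x'.
rewrite /a' (push_sum hs (cutvec R x')).
exact: (valid_cut hv (fun i => x' (sig i))).
Qed.
End E.
Section F.
Variable R : realType.

Lemma core k (hk : (2 <= k)%N) (c : R) (c0 : 0 < c)
  (H : forall a : 'I_k * 'I_k -> R, 0 < ip (Kedges k) a ->
         sdp (Kedges k) a <= c * ip (Kedges k) a)
  n (E : {set 'I_n * 'I_n}) (hE : E \subset Kedges n) (hG : inGk R k E)
  (w : 'I_n * 'I_n -> R) : sdp E w <= c * ip E w.
Proof.
apply: sdp_le => u hu.
pose D p := \sum_(l < n) u p.1 l * u p.2 l.
pose y p := D p / c.
have hy : inRk k y.
  move=> a alpha hv hS.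
  have -> : \sum_(p in Kedges n) a p * y p = (\sum_(p in Kedges n) a p * D p) / c.
    by rewrite mulr_suml; apply: eq_bigr => p _; rewrite /y mulrA.
  rewrite ler_pdivrMr // mulrC /D; exact: (transfer hk (ltW c0) H hv hS hu).
have [y' [[lam [lam0 [lam1 hlam]]] hyy']] := (proj2 (hG y)) (ex_intro _ y (conj hy (fun p _ => erefl))).
have -> : \sum_(p in E) w p * D p = c * \sum_(p in E) w p * y p.
  rewrite mulr_sumr; apply: eq_bigr => p _; rewrite /y; field; by rewrite gt_eqF.
rewrite ler_pM2l //.
have -> : \sum_(p in E) w p * y p = \sum_x lam x * \sum_(p in E) w p * cutvec R x p.
  rewrite (eq_bigr (fun p => \sum_x lam x * (w p * cutvec R x p))).
    by rewrite exchange_big /=; apply: eq_bigr => x _; rewrite mulr_sumr.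
  move=> p hp; rewrite hyy' // hlam; last by apply: (fintype.subsetP hE).
  by rewrite mulr_sumr; apply: eq_bigr => x _; ring.
have -> : ip E w = \sum_x lam x * ip E w by rewrite -mulr_suml lam1 mul1r.
by apply: ler_sum => x _; apply: ler_wpM2l => //; exact: ip_ub.
Qed.

Lemma part1 k (hk : (2 <= k)%N) n (E : {set 'I_n * 'I_n}) :
  E \subset Kedges n -> inGk R k E -> (kappa R E <= kappa R (Kedges k))%E.
Proof.
move=> hE hG.
pose a1 : 'I_k * 'I_k -> R := fun _ => 1.
have ip1 : 0 < ip (Kedges k) a1.
  apply: lt_le_trans (ip_ub (Kedges k) a1 (fun _ => true)).
  rewrite (eq_bigr (fun _ => 1)); last by move=> p _; rewrite /a1 /cutvec /sgn !mul1r.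
  by rewrite sumr_const ltr0n Kedges_card_gt0.
have rat1 : (1%:E <= kappa R (Kedges k))%E.
  apply: le_trans (ereal_sup_ubound _); last by exists a1.
  by rewrite lee_fin ler_pdivlMr // mul1r ip_le_sdp.
case hK : (kappa R (Kedges k)) => [r| |]; last 2 first.
- by rewrite leey.
- by rewrite hK in rat1.
rewrite hK lee_fin in rat1.
have r0 : 0 < r by apply: lt_le_trans rat1.
have H : forall a : 'I_k * 'I_k -> R, 0 < ip (Kedges k) a ->
         sdp (Kedges k) a <= r * ip (Kedges k) a.
  move=> a ha.
  have : ((sdp (Kedges k) a / ip (Kedges k) a)%:E <= kappa R (Kedges k))%E.
    by apply: ereal_sup_ubound; exists a.
  by rewrite hK lee_fin ler_pdivrMr // mulrC.
apply: ge_ereal_sup => _ [w hw <-].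
rewrite lee_fin ler_pdivrMr //.
exact: (core hk r0 H hE hG w).
Qed.
End F.
Section G.
Variable R : realType.
Local Open Scope classical_set_scope.

Lemma cont_sum (T : topologicalType) (I : Type) (s : seq I) (P : pred I)
   (F : I -> T -> R) : (forall i, continuous (F i)) ->
   continuous (fun v => \sum_(i <- s | P i) F i v).
Proof.
move=> hF; elim: s => [|a s IH].
  have -> : (fun v : T => \sum_(i <- [::] | P i) F i v) = (fun=> 0).
    by apply: funext => v; rewrite big_nil.
  exact: cst_continuous.
case hPa : (P a).
  have -> : (fun v : T => \sum_(i <- a :: s | P i) F i v) =
     (fun v => F a v + \sum_(i <- s | P i) F i v).
    by apply: funext => v; rewrite big_cons hPa.
  by move=> x; apply: cvgD; [exact: hF| exact: IH].
have -> : (fun v : T => \sum_(i <- a :: s | P i) F i v) =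
     (fun v => \sum_(i <- s | P i) F i v).
  by apply: funext => v; rewrite big_cons hPa.
exact: IH.
Qed.

Lemma cont_mul (T : topologicalType) (f g : T -> R) :
  continuous f -> continuous g -> continuous (fun v => f v * g v).
Proof. by move=> hf hg x; apply: cvgM; [exact: hf| exact: hg]. Qed.

Lemma cont_sub (T : topologicalType) (f g : T -> R) :
  continuous f -> continuous g -> continuous (fun v => f v - g v).
Proof. by move=> hf hg x; apply: cvgB; [exact: hf| exact: hg]. Qed.

Lemma sep n (y : 'I_n * 'I_n -> R) : ~ inCUT y ->
  exists a alpha, valid a alpha /\ alpha < \sum_(p in Kedges n) a p * y p.
Proof.
move=> hy.
pose N := #|{ffun 'I_n -> bool}|.
pose ev (i : 'I_N) : {ffun 'I_n -> bool} := enum_val i.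
pose c (i : 'I_N) p := cutvec R (ev i) p.
pose P (v : 'rV[R]_N) p := \sum_(i < N) v ord0 i * c i p.
pose f (v : 'rV[R]_N) := \sum_(p in Kedges n) (y p - P v p) ^+ 2.
pose B := [set v : 'rV[R]_N | forall i, `[(0:R), 1]%classic (v ord0 i)].
pose C := [set v : 'rV[R]_N | \sum_(i < N) v ord0 i = 1].
have contS : continuous (fun v : 'rV[R]_N => \sum_(i < N) v ord0 i).
  by apply: cont_sum => i; exact: coord_continuous.
have clC : closed C.
  have -> : C = (fun v : 'rV[R]_N => \sum_(i < N) v ord0 i) @^-1` [set x | x = 1].
    by [].
  by apply: preimage_closed; [move=> x _; exact: contS| exact: closed_eq].
have cA : compact (B `&` C).
  apply: compact_closedI clC.
  have := @rV_compact R N (fun _ => `[(0:R), 1]%classic) (fun _ => @segment_compact R 0 1). exact.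
have fc : continuous f.
  apply: cont_sum => p; apply: cont_mul; apply: cont_sub; try exact: cst_continuous;
    apply: cont_sum => i; apply: cont_mul; try exact: cst_continuous; exact: coord_continuous.
have mB v : B v <-> forall i, 0 <= v ord0 i <= 1.
  by split => h i; have := h i; rewrite /= in_itv.
pose i0 : 'I_N := enum_rank [ffun=> false].
pose e (j : 'I_N) : 'rV[R]_N := \row_i (i == j)%:R.
have sum_delta (F : 'I_N -> R) j : \sum_(i < N) (i == j)%:R * F i = F j.
  by rewrite (bigD1 j) //= eqxx mul1r big1 ?addr0 // => i /negbTE ->; rewrite mul0r.
have A0 : (B `&` C) !=set0.
  exists (e i0); split.
    by apply/mB => i; rewrite mxE; case: (i == i0); rewrite ?ler01 ?lexx.
  rewrite /C /=; under eq_bigr do rewrite mxE.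
  transitivity (\sum_(i < N) (i == i0)%:R * (1:R)); first by apply: eq_bigr => i _; rewrite mulr1.
  exact: (sum_delta (fun=> 1)).
have [ls hls hmin] := compact_EVT_min A0 cA (@continuous_subspaceT _ _ (B `&` C) f fc).
have [lsB lsC] := set_mem hls.
have /mB lsB' := lsB.
pose q p := P ls p.
pose d p := y p - q p.
have key j : \sum_(p in Kedges n) d p * (c j p - q p) <= 0.
  rewrite leNgt; apply/negP => s0.
  set s := \sum_(p in Kedges n) d p * (c j p - q p) in s0.
  pose m := \sum_(p in Kedges n) (c j p - q p) ^+ 2.
  have m0 : 0 <= m by apply: sumr_ge0 => p _; rewrite sqr_ge0.
  pose t := s / (s + m).
  have sm0 : 0 < s + m by lra.
  have t0 : 0 < t by rewrite divr_gt0.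
  have t1 : t <= 1 by rewrite ler_pdivrMr // mul1r; lra.
  have ts : t * (s + m) = s by rewrite /t mulfVK // gt_eqF.
  pose lt : 'rV[R]_N := \row_i ((1 - t) * ls ord0 i + t * (i == j)%:R).
  have ltA : (B `&` C) lt.
    split.
      apply/mB => i; rewrite mxE; have /andP[h0 h1] := lsB' i.
      have hd : 0 <= ((i == j)%:R : R) <= 1 by case: (i == j); rewrite ?ler01 ?lexx.
      case/andP: hd => hd0 hd1.
      have h2 : 0 <= (1 - t) * ls ord0 i by rewrite mulr_ge0 // subr_ge0.
      have h3 : 0 <= t * (i == j)%:R by rewrite mulr_ge0 // ltW.
      have h4 : (1 - t) * ls ord0 i <= (1 - t) by rewrite ler_piMr // subr_ge0.
      have h5 : t * (i == j)%:R <= t by rewrite ler_piMr // ltW.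
      apply/andP; split; lra.
    rewrite /C /=; under eq_bigr do rewrite mxE.
    rewrite big_split /= -mulr_sumr lsC -mulr_sumr.
    have -> : \sum_(i < N) ((i == j)%:R : R) = 1.
      transitivity (\sum_(i < N) (i == j)%:R * (1:R)); first by apply: eq_bigr => i _; rewrite mulr1.
      exact: (sum_delta (fun=> 1)).
    ring.
  have Plt p : P lt p = (1 - t) * q p + t * c j p.
    rewrite /P; under eq_bigr do rewrite mxE mulrDl.
    rewrite big_split /=; congr (_ + _).
      by rewrite /q /P mulr_sumr; apply: eq_bigr => i _; ring.
    by rewrite -(sum_delta (fun i => c i p) j) mulr_sumr; apply: eq_bigr => i _; ring.
  have := hmin lt (mem_set ltA).
  have -> : f lt = f ls - (2 * t) * s + t ^+ 2 * m.
    rewrite /f /s /m !mulr_sumr -sumrB -big_split /=; apply: eq_bigr => p _.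
    by rewrite Plt /d /q; ring.
  move=> h.
  have h1 : (2 * t) * s <= t ^+ 2 * m by lra.
  have h2 : 2 * s <= t * m.
    by rewrite -(ler_pM2l t0); move: h1; rewrite expr2; congr (_ <= _); ring.
  have h3 : 2 * s * (s + m) <= s * m.
    have he : t * m * (s + m) = s * m by rewrite mulrAC ts.
    by have := ler_wpM2r (ltW sm0) h2; rewrite he.
  have : 0 < s * s by rewrite mulr_gt0.
  have : 0 <= s * m by rewrite mulr_ge0 // ltW.
  nra.
have evK x : c (enum_rank x) = cutvec R x.
  by apply: funext => p; rewrite /c /ev enum_rankK.
have reidx (F : {ffun 'I_n -> bool} -> R) :
    \sum_(x : {ffun 'I_n -> bool}) F x = \sum_(j < N) F (ev j).
  by rewrite (reindex ev) //; exists enum_rank => j _; [exact: enum_valK | exact: enum_rankK].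
exists d, (\sum_(p in Kedges n) d p * q p); split.
  move=> y' [lam [l0 [l1 hl]]].
  have -> : \sum_(p in Kedges n) d p * y' p =
      \sum_x lam x * \sum_(p in Kedges n) d p * cutvec R x p.
    rewrite (eq_bigr (fun p => \sum_x lam x * (d p * cutvec R x p))).
      by rewrite exchange_big /=; apply: eq_bigr => x _; rewrite mulr_sumr.
    by move=> p hp; rewrite hl // mulr_sumr; apply: eq_bigr => x _; ring.
  rewrite -[X in _ <= X]mul1r -l1 mulr_suml; apply: ler_sum => x _.
  apply: ler_wpM2l => //.
  have := key (enum_rank x); rewrite evK.
  have -> : \sum_(p in Kedges n) d p * (cutvec R x p - q p) =
     \sum_(p in Kedges n) d p * cutvec R x p - \sum_(p in Kedges n) d p * q p.
    by rewrite -sumrB; apply: eq_bigr => p _; rewrite mulrBr.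
  by rewrite subr_le0.
rewrite -subr_gt0.
have -> : \sum_(p in Kedges n) d p * y p - \sum_(p in Kedges n) d p * q p =
   \sum_(p in Kedges n) d p * d p.
  by rewrite -sumrB; apply: eq_bigr => p _; rewrite /d mulrBr.
rewrite lt_def sumr_ge0 ?andbT; last by move=> p _; rewrite -expr2 sqr_ge0.
apply/negP => h0; apply: hy.
have dz p : p \in Kedges n -> d p = 0.
  move=> hp; move: h0; rewrite psumr_eq0; last by move=> p' _; rewrite -expr2 sqr_ge0.
  move=> /allP /(_ p (mem_index_enum _)); rewrite hp /= mulf_eq0 orbb => /eqP //.
exists (fun x => ls ord0 (enum_rank x)); split.
  by move=> x; have /andP[] := lsB' (enum_rank x).
split.
  by rewrite reidx; under eq_bigr do rewrite /ev enum_valK.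
move=> p hp; rewrite reidx.
have := dz p hp; rewrite /d => /eqP; rewrite subr_eq0 => /eqP ->.
by rewrite /q /P; apply: eq_bigr => j _; rewrite /ev enum_valK.
Qed.
End G.

Theorem mainTheorem9 (R : realType) (k : nat) :
  (2 <= k)%N ->
  (forall (n : nat) (E : {set 'I_n * 'I_n}),
      E \subset Kedges n -> inGk R k E ->
      (kappa R E <= kappa R (Kedges k))%E)
  /\ inGk R k (Kedges k).
Proof.
move=> hk; split; first by move=> n E; exact: part1.
move=> z; split => -[y [hy hz]]; exists y; split => //.
  by move=> a alpha hv _; exact: hv.
case: (pselect (inCUT y)) => // hn; exfalso.
have [a [al [hv hlt]]] := sep hn.
have hc : (#|Defs.support a| <= k)%N.
  by apply: leq_trans (max_card _) _; rewrite card_ord.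
by have := hy a al hv hc; rewrite leNgt hlt.
Qed.
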